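(* Let $E$ be a sequentially complete locally convex space, $A$ a closed linear operator on $E$, $0<\tau\le\infty$ and $n\in\mathbb N_0$. (i) Suppose that for every $x\in D(A^n)$ the abstract Cauchy problem $(ACP_1)$ has a unique mild solution $u(\cdot;x)$ on $[0,\tau)$. Then $A$ is stationary dense and $n(A)\le n$. (ii) Suppose that $A$ generates a locally equicontinuous $n$-times integrated semigroup $(S_n(t))_{t\in[0,\tau)}$ on $E$. Then $A$ is stationary dense and $n(A)\le n$.
   Context: $E$ is a Hausdorff sequentially complete locally convex space whose topology is given by a family $\circledast$ of continuous seminorms. For a closed linear operator $A$ on $E$, $D(A^m)$ denotes the domain of the $m$-th power of $A$. $A$ is called stationary dense if $$n(A):=\inf\{k\in\mathbb N_0:\ D(A^m)\subseteq\overline{D(A^{m+1})}\ \text{for all } m\ge k\}<\infty .$$ The abstract Cauchy problem $(ACP_1)$ is: find $u\in C([0,\tau):[D(A)])\cap C^1([0,\tau):E)$ with $u'(t)=Au(t)$ for $t\in[0,\tau)$ and $u(0)=x$. A mild solution of $(ACP_1)$ is a continuous function $u(\cdot;x):[0,\tau)\to E$ such that $\int_0^t u(s;x)\,ds\in D(A)$ and $A\int_0^t u(s;x)\,ds=u(t;x)-x$ for all $t\in[0,\tau)$. A locally equicontinuous $n$-times integrated semigroup generated by $A$ is a strongly continuous family $(S_n(t))_{t\in[0,\tau)}$ of continuous linear operators on $E$, equicontinuous on every compact subinterval of $[0,\tau)$, with $S_n(t)A\subseteq AS_n(t)$, such that for all $x\in E$ and $t\in[0,\tau)$, $\int_0^tS_n(s)x\,ds\in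 D(A)$ and $A\int_0^tS_n(s)x\,ds=S_n(t)x-\frac{t^n}{n!}x$, and $A$ is the (integral) generator of this family. *)

(* Defs.v *)
From Stdlib Require Import Reals List Arith.
Open Scope R_scope.

Record LCS := {
  car :> Type;
  vzero : car;
  vadd : car -> car -> car;
  vopp : car -> car;
  vscal : R -> car -> car;
  vadd_assoc : forall x y z, vadd x (vadd y z) = vadd (vadd x y) z;
  vadd_comm : forall x y, vadd x y = vadd y x;
  vadd_zero : forall x, vadd x vzero = x;
  vadd_opp : forall x, vadd x (vopp x) = vzero;
  vscal_one : forall x, vscal 1 x = x;
  vscal_assoc : forall a b x, vscal a (vscal b x) = vscal (a * b) x;
  vscal_distr_v : forall a x y, vscal a (vadd x y) = vadd (vscal a x) (vscal a y);
  vscal_distr_r : forall a b x, vscal (a + b) x = vadd (vscal a x) (vscal b x);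
  idx : Type;
  sn : idx -> car -> R;
  sn_nonneg : forall i x, 0 <= sn i x;
  sn_triangle : forall i x y, sn i (vadd x y) <= sn i x + sn i y;
  sn_homog : forall i a x, sn i (vscal a x) = Rabs a * sn i x;
  sn_sep : forall x, (forall i, sn i x = 0) -> x = vzero;
  seq_complete : forall u : nat -> car,
    (forall i eps, 0 < eps -> exists N, forall m k, (N <= m)%nat -> (N <= k)%nat ->
        sn i (vadd (u m) (vopp (u k))) < eps) ->
    exists l, forall i eps, 0 < eps -> exists N, forall m, (N <= m)%nat ->
        sn i (vadd (u m) (vopp l)) < eps
}.

Arguments vzero {_}.
Arguments vadd {_}.
Arguments vopp {_}.
Arguments vscal {_}.
Arguments sn {_}.

Definition vsub {E : LCS} (x y : E) : E := vadd x (vopp y).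

(** Topological closure of a set (basic neighbourhoods: finitely many seminorms). *)
Definition in_closure {E : LCS} (S : E -> Prop) (x : E) : Prop :=
  forall (F : list (idx E)) (eps : R), 0 < eps ->
    exists y, S y /\ forall i, In i F -> sn i (vsub x y) < eps.

Record Op (E : LCS) := { dom : E -> Prop; app : E -> E }.
Arguments dom {_}.
Arguments app {_}.

Definition linear_op {E : LCS} (A : Op E) : Prop :=
  dom A vzero /\
  (forall x y, dom A x -> dom A y -> dom A (vadd x y) /\ app A (vadd x y) = vadd (app A x) (app A y)) /\
  (forall a x, dom A x -> dom A (vscal a x) /\ app A (vscal a x) = vscal a (app A x)).

Definition closed_op {E : LCS} (A : Op E) : Prop :=
  linear_op A /\
  forall x y : E,
    (forall (F : list (idx E)) (eps : R), 0 < eps ->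
       exists z, dom A z /\ forall i, In i F ->
         sn i (vsub x z) < eps /\ sn i (vsub y (app A z)) < eps) ->
    dom A x /\ app A x = y.

Fixpoint domPow {E : LCS} (A : Op E) (m : nat) (x : E) : Prop :=
  match m with
  | O => True
  | S m' => dom A x /\ domPow A m' (app A x)
  end.

(** k belongs to the set whose infimum is n(A). *)
Definition stat_index {E : LCS} (A : Op E) (k : nat) : Prop :=
  forall m, (k <= m)%nat -> forall x, domPow A m x -> in_closure (domPow A (S m)) x.

(** "A is stationary dense and n(A) <= n":  inf {k | stat_index A k} <= n
    (the infimum over a set of naturals is attained). *)
Definition stat_dense_le {E : LCS} (A : Op E) (n : nat) : Prop :=
  exists k, (k <= n)%nat /\ stat_index A k.

(** * The interval [0, tau), tau in (0, +oo];  None encodes tau = +oo. *)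
Definition tau_pos (tau : option R) : Prop :=
  match tau with Some T => 0 < T | None => True end.
Definition in_I (tau : option R) (t : R) : Prop :=
  0 <= t /\ match tau with Some T => t < T | None => True end.

(* A tagged partition of [a,b] : list of (right endpoint, tag). *)
Fixpoint tagged_part (a b : R) (l : list (R * R)) : Prop :=
  match l with
  | nil => a = b
  | (x, xi) :: l' => a <= xi <= x /\ tagged_part x b l'
  end.

Fixpoint fine (delta a : R) (l : list (R * R)) : Prop :=
  match l with
  | nil => True
  | (x, _) :: l' => x - a < delta /\ fine delta x l'
  end.

Fixpoint rsum {E : LCS} (f : R -> E) (a : R) (l : list (R * R)) : E :=
  match l with
  | nil => vzero
  | (x, xi) :: l' => vadd (vscal (x - a) (f xi)) (rsum f x l')
  end.

Definition is_integral {E : LCS} (f : R -> E) (a b : R) (y : E) : Prop :=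
  forall i eps, 0 < eps -> exists delta, 0 < delta /\
    forall l, tagged_part a b l -> fine delta a l -> sn i (vsub (rsum f a l) y) < eps.

Definition cont_on_I {E : LCS} (tau : option R) (u : R -> E) : Prop :=
  forall t, in_I tau t -> forall i eps, 0 < eps -> exists delta, 0 < delta /\
    forall s, in_I tau s -> Rabs (s - t) < delta -> sn i (vsub (u s) (u t)) < eps.

Definition mild_solution {E : LCS} (A : Op E) (tau : option R) (x : E) (u : R -> E) : Prop :=
  cont_on_I tau u /\
  forall t, in_I tau t -> exists y, is_integral u 0 t y /\ dom A y /\ app A y = vsub (u t) x.

Definition unique_mild {E : LCS} (A : Op E) (tau : option R) (x : E) : Prop :=
  exists u, mild_solution A tau x u /\
    forall v, mild_solution A tau x v -> forall t, in_I tau t -> v t = u t.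

Definition linear_map {E : LCS} (T : E -> E) : Prop :=
  (forall x y, T (vadd x y) = vadd (T x) (T y)) /\ (forall a x, T (vscal a x) = vscal a (T x)).

Definition continuous_map {E : LCS} (T : E -> E) : Prop :=
  forall x0 i eps, 0 < eps -> exists (F : list (idx E)) delta, 0 < delta /\
    forall x, (forall j, In j F -> sn j (vsub x x0) < delta) -> sn i (vsub (T x) (T x0)) < eps.

Definition tn_fact (n : nat) (t : R) : R := t ^ n / INR (Factorial.fact n).

Definition integral_generator {E : LCS} (A : Op E) (tau : option R) (n : nat) (S : R -> E -> E) : Prop :=
  forall x y, (dom A x /\ app A x = y) <->
    (forall t, in_I tau t -> is_integral (fun s => S s y) 0 t (vsub (S t x) (vscal (tn_fact n t) x))).

Definition generates_int_semigroup {E : LCS} (A : Op E) (tau : option R) (n : nat)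
    (S : R -> E -> E) : Prop :=
  (forall t, in_I tau t -> linear_map (S t) /\ continuous_map (S t)) /\
  (forall x, cont_on_I tau (fun t => S t x)) /\
  (forall T, in_I tau T -> forall x0 i eps, 0 < eps -> exists (F : list (idx E)) delta, 0 < delta /\
     forall t x, 0 <= t <= T -> (forall j, In j F -> sn j (vsub x x0) < delta) ->
       sn i (vsub (S t x) (S t x0)) < eps) /\
  (forall t, in_I tau t -> forall x, dom A x -> dom A (S t x) /\ app A (S t x) = S t (app A x)) /\
  (forall t x, in_I tau t -> exists y, is_integral (fun s => S s x) 0 t y /\ dom A y /\
      app A y = vsub (S t x) (vscal (tn_fact n t) x)) /\
  integral_generator A tau n S.

(* Main.v *)
From Stdlib Require Import Reals List Lra Lia Psatz Classical ClassicalEpsilon.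
Require Import Defs.
Open Scope R_scope.


Section Vec.
Variable E : LCS.
Implicit Types x y z w : E.

Lemma vadd_zero_l x : vadd vzero x = x.
Proof. rewrite vadd_comm; apply vadd_zero. Qed.

Lemma vadd_cancel_l x y z : vadd x y = vadd x z -> y = z.
Proof.
  intros H. rewrite <- (vadd_zero_l y), <- (vadd_zero_l z).
  rewrite <- (vadd_opp _ x), (vadd_comm _ x (vopp x)), <- !vadd_assoc, H. reflexivity.
Qed.

Lemma vopp_unique x y : vadd x y = vzero -> y = vopp x.
Proof. intros H. apply (vadd_cancel_l x). rewrite H, vadd_opp. reflexivity. Qed.

Lemma vopp_vopp x : vopp (vopp x) = x.
Proof. symmetry. apply vopp_unique. rewrite vadd_comm. apply vadd_opp. Qed.

Lemma vadd_swap x y z w : vadd (vadd x y) (vadd z w) = vadd (vadd x z) (vadd y w).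
Proof.
  rewrite <- !vadd_assoc. f_equal. rewrite !vadd_assoc. f_equal. apply vadd_comm.
Qed.

Lemma vopp_add x y : vopp (vadd x y) = vadd (vopp x) (vopp y).
Proof.
  symmetry. apply vopp_unique. rewrite vadd_swap, !vadd_opp. apply vadd_zero.
Qed.

Lemma vopp_zero : vopp (@vzero E) = vzero.
Proof. symmetry; apply vopp_unique. apply vadd_zero. Qed.

Lemma vscal_zero_r a : vscal a (@vzero E) = vzero.
Proof.
  apply (vadd_cancel_l (vscal a vzero)). rewrite <- vscal_distr_v, !vadd_zero. reflexivity.
Qed.

Lemma vscal_zero_l x : vscal 0 x = vzero.
Proof.
  apply (vadd_cancel_l (vscal 0 x)). rewrite <- vscal_distr_r, Rplus_0_r, vadd_zero. reflexivity.
Qed.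

Lemma vscal_opp_l a x : vscal (- a) x = vopp (vscal a x).
Proof.
  apply vopp_unique. rewrite <- vscal_distr_r, Rplus_opp_r. apply vscal_zero_l.
Qed.

Lemma vscal_opp_r a x : vscal a (vopp x) = vopp (vscal a x).
Proof.
  apply vopp_unique. rewrite <- vscal_distr_v, vadd_opp. apply vscal_zero_r.
Qed.

Lemma vscal_m1 x : vscal (- (1)) x = vopp x.
Proof. rewrite vscal_opp_l, vscal_one. reflexivity. Qed.

Lemma vsub_add x y z w : vsub (vadd x y) (vadd z w) = vadd (vsub x z) (vsub y w).
Proof. unfold vsub. rewrite vopp_add. apply vadd_swap. Qed.

Lemma vscal_sub a x y : vscal a (vsub x y) = vsub (vscal a x) (vscal a y).
Proof. unfold vsub. rewrite vscal_distr_v, vscal_opp_r. reflexivity. Qed.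

Lemma vsub_scal_l a b x : vsub (vscal a x) (vscal b x) = vscal (a - b) x.
Proof. unfold vsub, Rminus. rewrite vscal_distr_r, vscal_opp_l. reflexivity. Qed.

Lemma vsub_diag x : vsub x x = vzero.
Proof. apply vadd_opp. Qed.

Lemma vsub_zero_r x : vsub x vzero = x.
Proof. unfold vsub. rewrite vopp_zero. apply vadd_zero. Qed.

Lemma vsub_zero_l x : vsub vzero x = vopp x.
Proof. unfold vsub. apply vadd_zero_l. Qed.

Lemma vsub_opp x y : vopp (vsub x y) = vsub y x.
Proof. unfold vsub. rewrite vopp_add, vopp_vopp. apply vadd_comm. Qed.

Lemma vsub_chain x y z : vadd (vsub x y) (vsub y z) = vsub x z.
Proof.
  unfold vsub. rewrite (vadd_assoc _ (vadd x (vopp y)) y (vopp z)).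
  rewrite <- (vadd_assoc _ x (vopp y) y), (vadd_comm _ (vopp y) y), vadd_opp, vadd_zero. reflexivity.
Qed.

Lemma vsub_eq0 x y : vsub x y = vzero -> x = y.
Proof.
  intros H. unfold vsub in H. apply vopp_unique in H. rewrite <- (vopp_vopp y), H, vopp_vopp. reflexivity.
Qed.

Lemma vadd_sub x y : vsub (vadd x y) x = y.
Proof. unfold vsub. rewrite (vadd_comm _ x y), <- vadd_assoc, vadd_opp, vadd_zero. reflexivity. Qed.

Lemma vsub_sub4 x y z w : vsub (vsub x y) (vsub z w) = vsub (vsub x z) (vsub y w).
Proof. unfold vsub. rewrite !vopp_add, !vopp_vopp. apply vadd_swap. Qed.

Lemma sn_zero i : sn i (@vzero E) = 0.
Proof. rewrite <- (vscal_zero_l vzero), sn_homog, Rabs_R0. ring. Qed.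

Lemma sn_opp i x : sn i (vopp x) = sn i x.
Proof. rewrite <- vscal_m1, sn_homog, Rabs_Ropp, Rabs_R1. ring. Qed.

Lemma sn_sub_sym i x y : sn i (vsub x y) = sn i (vsub y x).
Proof. rewrite <- vsub_opp, sn_opp. reflexivity. Qed.

Lemma sn_sub_tri i x y z : sn i (vsub x z) <= sn i (vsub x y) + sn i (vsub y z).
Proof. rewrite <- (vsub_chain x y z). apply sn_triangle. Qed.

Lemma sn_sub_le i x y : sn i (vsub x y) <= sn i x + sn i y.
Proof. unfold vsub. rewrite <- (sn_opp i y). apply sn_triangle. Qed.

Lemma sn_rev_tri i x y : sn i x <= sn i (vsub x y) + sn i y.
Proof. rewrite <- (vsub_zero_r x) at 1. rewrite <- (vsub_zero_r y) at 2. apply sn_sub_tri. Qed.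

Lemma sep_small x : (forall i eps, 0 < eps -> sn i x < eps) -> x = vzero.
Proof.
  intros H. apply sn_sep. intros i. pose proof (sn_nonneg E i x).
  destruct (Req_dec (sn i x) 0) as [h|h]; auto.
  specialize (H i (sn i x) ltac:(lra)). lra.
Qed.

Lemma le_eps_R (r M : R) : (forall eps, 0 < eps -> r < M + eps) -> r <= M.
Proof.
  intros H. destruct (Rle_dec r M); auto. specialize (H ((r - M)/2) ltac:(lra)). lra.
Qed.

End Vec.


Section Integ.
Variable E : LCS.
Implicit Types f g : R -> E.

Lemma tp_le a b l : tagged_part a b l -> a <= b.
Proof.
  revert a. induction l as [|[x xi] l IH]; simpl; intros a H.
  - lra.
  - destruct H as [H1 H2]. apply IH in H2. lra.
Qed.

Lemma rsum_ext_on f g a b l : tagged_part a b l ->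
  (forall s, a <= s <= b -> f s = g s) -> rsum f a l = rsum g a l.
Proof.
  revert a. induction l as [|[x xi] l IH]; simpl; intros a H Hfg; auto.
  destruct H as [H1 H2]. pose proof (tp_le _ _ _ H2).
  rewrite Hfg by lra. rewrite (IH x H2); auto.
  intros s Hs; apply Hfg; lra.
Qed.

Lemma rsum_add f g a l :
  rsum (fun s => vadd (f s) (g s)) a l = vadd (rsum f a l) (rsum g a l).
Proof.
  revert a. induction l as [|[x xi] l IH]; simpl; intros a.
  - rewrite vadd_zero; auto.
  - rewrite IH, vscal_distr_v. apply vadd_swap.
Qed.

Lemma rsum_scal c f a l :
  rsum (fun s => vscal c (f s)) a l = vscal c (rsum f a l).
Proof.
  revert a. induction l as [|[x xi] l IH]; simpl; intros a.
  - rewrite vscal_zero_r; auto.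
  - rewrite IH, vscal_distr_v, !vscal_assoc, Rmult_comm. auto.
Qed.

Lemma rsum_sub f g a l :
  rsum (fun s => vsub (f s) (g s)) a l = vsub (rsum f a l) (rsum g a l).
Proof.
  revert a. induction l as [|[x xi] l IH]; simpl; intros a.
  - rewrite vsub_zero_r; auto.
  - rewrite IH, vscal_sub. symmetry. apply vsub_add.
Qed.

Lemma rsum_bound i f a b l M : tagged_part a b l ->
  (forall s, a <= s <= b -> sn i (f s) <= M) -> sn i (rsum f a l) <= M * (b - a).
Proof.
  revert a. induction l as [|[x xi] l IH]; simpl; intros a H Hf.
  - subst. rewrite sn_zero. lra.
  - destruct H as [H1 H2]. pose proof (tp_le _ _ _ H2).
    eapply Rle_trans. apply sn_triangle. rewrite sn_homog, Rabs_pos_eq by lra.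
    assert (sn i (f xi) <= M) by (apply Hf; lra).
    assert (sn i (rsum f x l) <= M * (b - x)) by (apply IH; auto; intros; apply Hf; lra).
    pose proof (sn_nonneg E i (f xi)). nra.
Qed.

Lemma rsum_point f a l : tagged_part a a l -> rsum f a l = vzero.
Proof.
  revert a. induction l as [|[x xi] l IH]; simpl; intros a H; auto.
  destruct H as [H1 H2]. pose proof (tp_le _ _ _ H2). assert (x = a) by lra. subst.
  rewrite IH; auto. rewrite Rminus_diag, vscal_zero_l, vadd_zero; auto.
Qed.

Lemma fine_mono d d' a l : fine d a l -> d <= d' -> fine d' a l.
Proof.
  revert a. induction l as [|[x xi] l IH]; simpl; intros a H Hd; auto.
  destruct H; split; auto. lra.
Qed.

Fixpoint gen (a h : R) (k : nat) : list (R * R) :=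
  match k with O => nil | S k' => (a + h, a) :: gen (a + h) h k' end.

Lemma gen_tp a h k : 0 <= h -> tagged_part a (a + INR k * h) (gen a h k).
Proof.
  revert a. induction k as [|k IH]; cbn [gen tagged_part]; intros a Hh.
  - simpl; ring.
  - split. lra. replace (a + INR (S k) * h) with (a + h + INR k * h) by (rewrite S_INR; ring).
    apply IH; auto.
Qed.

Lemma gen_fine a h k d : h < d -> fine d a (gen a h k).
Proof.
  revert a. induction k as [|k IH]; simpl; intros a Hh; auto. split; auto. lra.
Qed.

Lemma arch_div a b d : a <= b -> 0 < d -> exists N, (b - a) / INR (S N) < d.
Proof.
  intros Hab Hd. destruct (INR_archimed d (b - a) Hd) as [N HN].
  exists N. pose proof (pos_INR N). rewrite S_INR.
  apply (Rmult_lt_reg_r (INR N + 1)). lra. unfold Rdiv. rewrite Rmult_assoc, Rinv_l by lra. nra.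
Qed.

Lemma fine_exists a b d : a <= b -> 0 < d -> exists l, tagged_part a b l /\ fine d a l.
Proof.
  intros Hab Hd. destruct (arch_div a b d Hab Hd) as [N HN].
  exists (gen a ((b - a) / INR (S N)) (S N)). split.
  - replace b with (a + INR (S N) * ((b - a) / INR (S N))) at 1.
    + apply gen_tp. unfold Rdiv. apply Rmult_le_pos. lra. apply Rlt_le, Rinv_0_lt_compat, lt_0_INR; lia.
    + field. apply not_0_INR; lia.
  - apply gen_fine; auto.
Qed.

Lemma common_delta (P : idx E -> R -> Prop) :
  (forall i, exists d, 0 < d /\ forall d', 0 < d' -> d' <= d -> P i d') ->
  forall F : list (idx E), exists d, 0 < d /\ forall i, In i F -> P i d.
Proof.
  intros H F. assert (exists d, 0 < d /\ forall i, In i F -> forall d', 0 < d' -> d' <= d -> P i d').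
  { induction F as [|j F IH].
    - exists 1. split. lra. intros i [].
    - destruct IH as [d [Hd HF]]. destruct (H j) as [dj [Hdj Hj]].
      exists (Rmin d dj). split. apply Rmin_glb_lt; auto.
      intros i [<-|Hi] d' Hd' Hle.
      + apply Hj; auto. eapply Rle_trans; eauto. apply Rmin_r.
      + apply HF; auto. eapply Rle_trans; eauto. apply Rmin_l. }
  destruct H0 as [d [Hd HF]]. exists d. split; auto. intros i Hi. apply HF; auto. lra.
Qed.

Lemma integral_unique f a b y1 y2 : a <= b -> is_integral f a b y1 -> is_integral f a b y2 -> y1 = y2.
Proof.
  intros Hab H1 H2. apply vsub_eq0. apply sep_small. intros i eps Heps.
  destruct (H1 i (eps/2) ltac:(lra)) as [d1 [Hd1 P1]].
  destruct (H2 i (eps/2) ltac:(lra)) as [d2 [Hd2 P2]].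
  destruct (fine_exists a b (Rmin d1 d2) Hab ltac:(apply Rmin_glb_lt; auto)) as [l [Hl Hf]].
  specialize (P1 l Hl (fine_mono _ _ _ _ Hf (Rmin_l _ _))).
  specialize (P2 l Hl (fine_mono _ _ _ _ Hf (Rmin_r _ _))).
  eapply Rle_lt_trans. apply (sn_sub_tri _ i y1 (rsum f a l) y2).
  rewrite sn_sub_sym. lra.
Qed.

Lemma integral_point f a : is_integral f a a vzero.
Proof.
  intros i eps Heps. exists 1. split. lra. intros l Hl _. rewrite rsum_point; auto.
  rewrite vsub_zero_r, sn_zero. auto.
Qed.

Lemma integral_ext f g a b y : (forall s, a <= s <= b -> f s = g s) ->
  is_integral f a b y -> is_integral g a b y.
Proof.
  intros Hfg H i eps Heps. destruct (H i eps Heps) as [d [Hd P]]. exists d. split; auto.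
  intros l Hl Hf. rewrite <- (rsum_ext_on f g a b l); auto.
Qed.

Lemma integral_add f g a b y z : is_integral f a b y -> is_integral g a b z ->
  is_integral (fun s => vadd (f s) (g s)) a b (vadd y z).
Proof.
  intros H1 H2 i eps Heps.
  destruct (H1 i (eps/2) ltac:(lra)) as [d1 [Hd1 P1]].
  destruct (H2 i (eps/2) ltac:(lra)) as [d2 [Hd2 P2]].
  exists (Rmin d1 d2). split. apply Rmin_glb_lt; auto. intros l Hl Hf.
  specialize (P1 l Hl (fine_mono _ _ _ _ Hf (Rmin_l _ _))).
  specialize (P2 l Hl (fine_mono _ _ _ _ Hf (Rmin_r _ _))).
  rewrite rsum_add, vsub_add. eapply Rle_lt_trans. apply sn_triangle. lra.
Qed.

Lemma integral_sub f g a b y z : is_integral f a b y -> is_integral g a b z ->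
  is_integral (fun s => vsub (f s) (g s)) a b (vsub y z).
Proof.
  intros H1 H2 i eps Heps.
  destruct (H1 i (eps/2) ltac:(lra)) as [d1 [Hd1 P1]].
  destruct (H2 i (eps/2) ltac:(lra)) as [d2 [Hd2 P2]].
  exists (Rmin d1 d2). split. apply Rmin_glb_lt; auto. intros l Hl Hf.
  specialize (P1 l Hl (fine_mono _ _ _ _ Hf (Rmin_l _ _))).
  specialize (P2 l Hl (fine_mono _ _ _ _ Hf (Rmin_r _ _))).
  rewrite rsum_sub, vsub_sub4.
  eapply Rle_lt_trans. apply sn_sub_le. lra.
Qed.

Lemma integral_scal c f a b y : is_integral f a b y ->
  is_integral (fun s => vscal c (f s)) a b (vscal c y).
Proof.
  intros H i eps Heps.
  destruct (H i (eps / (Rabs c + 1))) as [d [Hd P]].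
  { apply Rdiv_lt_0_compat; auto. pose proof (Rabs_pos c); lra. }
  exists d. split; auto. intros l Hl Hf. specialize (P l Hl Hf).
  rewrite rsum_scal, <- vscal_sub, sn_homog.
  pose proof (Rabs_pos c). pose proof (sn_nonneg E i (vsub (rsum f a l) y)).
  apply (Rmult_lt_compat_l (Rabs c + 1)) in P; [|lra].
  replace ((Rabs c + 1) * (eps / (Rabs c + 1))) with eps in P by (field; lra). nra.
Qed.

Lemma integral_bound i f a b y M : a <= b ->
  (forall s, a <= s <= b -> sn i (f s) <= M) -> is_integral f a b y -> sn i y <= M * (b - a).
Proof.
  intros Hab Hf H. apply le_eps_R. intros eps Heps.
  destruct (H i eps Heps) as [d [Hd P]].
  destruct (fine_exists a b d Hab Hd) as [l [Hl Hfl]].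
  specialize (P l Hl Hfl). pose proof (rsum_bound i f a b l M Hl Hf).
  pose proof (sn_rev_tri E i y (rsum f a l)). rewrite sn_sub_sym in H1. lra.
Qed.

End Integ.


Fixpoint rsumR (g : R -> R) (a : R) (l : list (R * R)) : R :=
  match l with
  | nil => 0
  | (x, xi) :: l' => (x - a) * g xi + rsumR g x l'
  end.

Lemma pow_bounds a b k : 0 <= a <= b ->
  INR (S k) * a ^ k * (b - a) <= b ^ (S k) - a ^ (S k) <= INR (S k) * b ^ k * (b - a).
Proof.
  intros Hab. induction k as [|k IH].
  - simpl. lra.
  - destruct IH as [IH1 IH2]. rewrite !S_INR in *. simpl in *.
    assert (0 <= a ^ k) by (apply pow_le; lra).
    assert (a ^ k <= b ^ k) by (apply pow_incr; lra).
    set (K := INR k) in *. assert (0 <= K) by apply pos_INR.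
    set (X := b * b ^ k - a * a ^ k) in *.
    replace (b * (b * b ^ k) - a * (a * a ^ k)) with (b * X + a * a ^ k * (b - a)) by (unfold X; ring).
    assert (0 <= (K + 1) * a ^ k * (b - a)) by (apply Rmult_le_pos; [apply Rmult_le_pos|]; lra).
    split.
    + assert (b * ((K + 1) * a ^ k * (b - a)) <= b * X) by (apply Rmult_le_compat_l; lra).
      assert (a * ((K + 1) * a ^ k * (b - a)) <= b * ((K + 1) * a ^ k * (b - a))) by (apply Rmult_le_compat_r; lra).
      nra.
    + assert (a * X <= a * ((K + 1) * b ^ k * (b - a))) by (apply Rmult_le_compat_l; lra).
      assert (0 <= X) by lra.
      assert (b * X <= a * X + (b - a) * ((K + 1) * b ^ k * (b - a))) by nra.
      assert (0 <= b ^ k) by (apply pow_le; lra).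
      assert (a * a ^ k * (b - a) <= b * b ^ k * (b - a)) by (apply Rmult_le_compat_r; [lra| apply Rmult_le_compat; lra]).
      nra.
Qed.

Lemma piece_bound a b xi k : 0 <= a -> a <= xi <= b ->
  Rabs ((b - a) * xi ^ k - (b ^ (S k) - a ^ (S k)) / INR (S k)) <= (b - a) * (b ^ k - a ^ k).
Proof.
  intros Ha Hxi. destruct (pow_bounds a b k ltac:(lra)) as [H1 H2].
  assert (Hk : 0 < INR (S k)) by (apply lt_0_INR; lia).
  assert (a ^ k <= xi ^ k) by (apply pow_incr; lra).
  assert (xi ^ k <= b ^ k) by (apply pow_incr; lra).
  set (D := (b ^ (S k) - a ^ (S k)) / INR (S k)).
  assert (a ^ k * (b - a) <= D <= b ^ k * (b - a)).
  { unfold D. split.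
    - apply (Rmult_le_reg_l (INR (S k))); auto. field_simplify; [|lra]. lra.
    - apply (Rmult_le_reg_l (INR (S k))); auto. field_simplify; [|lra]. lra. }
  apply Rabs_le. split; nra.
Qed.

Lemma rsumR_poly a b l d k : tagged_part a b l -> fine d a l -> 0 <= a -> 0 < d ->
  Rabs (rsumR (fun s => s ^ k) a l - (b ^ (S k) - a ^ (S k)) / INR (S k)) <= d * (b ^ k - a ^ k).
Proof.
  revert a. induction l as [|[x xi] l IH]; cbn [rsumR tagged_part fine]; intros a Hl Hf Ha Hd.
  - subst. replace (0 - (b ^ S k - b ^ S k) / INR (S k)) with 0 by (field; apply not_0_INR; lia).
    rewrite Rabs_R0. lra.
  - destruct Hl as [H1 H2]. destruct Hf as [F1 F2]. pose proof (tp_le _ _ _ H2).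
    specialize (IH x H2 F2 ltac:(lra) Hd).
    pose proof (piece_bound a x xi k Ha H1).
    assert (a ^ k <= x ^ k) by (apply pow_incr; lra).
    assert ((x - a) * (x ^ k - a ^ k) <= d * (x ^ k - a ^ k)) by nra.
    replace ((x - a) * xi ^ k + rsumR (fun s : R => s ^ k) x l - (b ^ S k - a ^ S k) / INR (S k))
      with (((x - a) * xi ^ k - (x ^ S k - a ^ S k) / INR (S k)) +
            (rsumR (fun s : R => s ^ k) x l - (b ^ S k - x ^ S k) / INR (S k)))
      by (field; apply not_0_INR; lia).
    eapply Rle_trans. apply Rabs_triang. lra.
Qed.

Section P.
Variable E : LCS.

Lemma rsum_scalR (g : R -> R) (v : E) a l :
  rsum (fun s => vscal (g s) v) a l = vscal (rsumR g a l) v.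
Proof.
  revert a. induction l as [|[x xi] l IH]; simpl; intros a.
  - rewrite vscal_zero_l; auto.
  - rewrite IH, vscal_assoc, vscal_distr_r. auto.
Qed.

Lemma rsumR_div (g : R -> R) c a l : rsumR (fun s => g s / c) a l = rsumR g a l / c.
Proof.
  revert a. induction l as [|[x xi] l IH]; simpl; intros a.
  - unfold Rdiv; ring.
  - rewrite IH. unfold Rdiv; ring.
Qed.

Lemma fact_pos k : 1 <= INR (Factorial.fact k).
Proof.
  pose proof (Factorial.lt_O_fact k). replace 1 with (INR 1) by reflexivity. apply le_INR. lia.
Qed.

Lemma integral_poly (v : E) k t : 0 <= t ->
  is_integral (fun s => vscal (tn_fact k s) v) 0 t (vscal (tn_fact (S k) t) v).
Proof.
  intros Ht i eps Heps.
  assert (Hp : 0 <= t ^ k * sn i v) by (apply Rmult_le_pos; [apply pow_le; lra| apply sn_nonneg]).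
  exists (eps / (t ^ k * sn i v + 1)). split. apply Rdiv_lt_0_compat; lra.
  intros l Hl Hf. rewrite rsum_scalR, vsub_scal_l, sn_homog.
  unfold tn_fact. rewrite rsumR_div.
  pose proof (fact_pos k) as Fk.
  assert (HSk : INR (S k) <> 0) by (apply not_0_INR; lia).
  assert (HFk : INR (Factorial.fact k) <> 0) by (intro; lra).
  replace (t ^ S k / INR (Factorial.fact (S k))) with ((t ^ S k - 0 ^ S k) / INR (S k) / INR (Factorial.fact k)).
  2:{ rewrite pow_i by lia. rewrite Rminus_0_r. change (Factorial.fact (S k)) with (S k * Factorial.fact k)%nat.
      rewrite mult_INR. assert (INR (S k) <> 0) by (apply not_0_INR; lia). field. split; auto; intro; lra. }
  set (d := eps / (t ^ k * sn i v + 1)).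
  assert (Hd : 0 < d) by (apply Rdiv_lt_0_compat; lra).
  pose proof (rsumR_poly 0 t l d k Hl Hf ltac:(lra) Hd) as HB.
  replace (rsumR (fun s : R => s ^ k) 0 l / INR (Factorial.fact k) -
     (t ^ S k - 0 ^ S k) / INR (S k) / INR (Factorial.fact k)) with
     ((rsumR (fun s : R => s ^ k) 0 l - (t ^ S k - 0 ^ S k) / INR (S k)) * / INR (Factorial.fact k))
     by (field; auto).
  rewrite Rabs_mult, Rabs_inv, (Rabs_pos_eq (INR _)) by lra.
  assert (0 <= 0 ^ k) by (apply pow_le; lra).
  assert (d * (t ^ k - 0 ^ k) <= d * t ^ k) by nra.
  set (X := Rabs _) in *.
  assert (0 <= X) by apply Rabs_pos.
  assert (X * / INR (Factorial.fact k) <= X).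
  { rewrite <- (Rmult_1_r X) at 2. apply Rmult_le_compat_l; auto.
    rewrite <- Rinv_1. apply Rinv_le_contravar; lra. }
  pose proof (sn_nonneg E i v).
  assert (X * sn i v <= d * t ^ k * sn i v) by nra.
  assert (d * (t ^ k * sn i v) < eps).
  { unfold d. apply (Rmult_lt_reg_r (t ^ k * sn i v + 1)). lra.
    field_simplify; lra. }
  nra.
Qed.

End P.


Lemma abs_lt x d : - d < x < d -> Rabs x < d.
Proof. intros [H1 H2]. apply Rabs_def1; auto. Qed.
Lemma abs_lt_inv x d : Rabs x < d -> - d < x < d.
Proof. intros H. apply Rabs_def2 in H. lra. Qed.

Section Exist.
Variable E : LCS.
Implicit Types f g : R -> E.

Fixpoint loose (d lo hi a b : R) (l : list (R * R)) : Prop :=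
  match l with
  | nil => a = b
  | (x, xi) :: l' => a <= x /\ Rabs (xi - a) < d /\ Rabs (xi - x) < d /\ lo <= xi <= hi /\
       loose d lo hi x b l'
  end.

Lemma loose_le d lo hi a b l : loose d lo hi a b l -> a <= b.
Proof.
  revert a. induction l as [|[x xi] l IH]; simpl; intros a H. lra.
  destruct H as [H1 [_ [_ [_ H]]]]. apply IH in H. lra.
Qed.

Lemma loose_point f d lo hi a l : loose d lo hi a a l -> rsum f a l = vzero.
Proof.
  revert a. induction l as [|[x xi] l IH]; simpl; intros a H; auto.
  destruct H as [H1 [_ [_ [_ H]]]]. pose proof (loose_le _ _ _ _ _ _ H). assert (x = a) by lra. subst.
  rewrite IH; auto. rewrite Rminus_diag, vscal_zero_l, vadd_zero; auto.
Qed.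

Lemma tp_loose d lo hi a b l : tagged_part a b l -> fine d a l -> lo <= a -> b <= hi ->
  loose d lo hi a b l.
Proof.
  revert a. induction l as [|[x xi] l IH]; simpl; intros a H Hf Hlo Hhi; auto.
  destruct H as [H1 H2]. destruct Hf as [F1 F2]. pose proof (tp_le _ _ _ H2).
  repeat split; try lra.
  - apply abs_lt; lra.
  - apply abs_lt; lra.
  - apply IH; auto; lra.
Qed.

Lemma merge_step f i eps d lo hi b N
  (IH : forall P Q a, (length P + length Q <= N)%nat -> loose d lo hi a b P -> loose d lo hi a b Q ->
        sn i (vsub (rsum f a P) (rsum f a Q)) <= eps * (b - a))
  (Hf : forall s r, lo <= s <= hi -> lo <= r <= hi -> Rabs (s - r) < 2 * d -> sn i (vsub (f s) (f r)) <= eps)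
  a x1 xi P y1 eta Q :
  (length P + S (length Q) <= N)%nat -> x1 <= y1 ->
  loose d lo hi a b ((x1, xi) :: P) -> loose d lo hi a b ((y1, eta) :: Q) ->
  sn i (vsub (rsum f a ((x1, xi) :: P)) (rsum f a ((y1, eta) :: Q))) <= eps * (b - a).
Proof.
  intros Hlen Hxy HP HQ. simpl in HP, HQ.
  destruct HP as [P1 [P2 [P3 [P4 P5]]]]. destruct HQ as [Q1 [Q2 [Q3 [Q4 Q5]]]].
  assert (HQ' : loose d lo hi x1 b ((y1, eta) :: Q)).
  { simpl. apply abs_lt_inv in Q2. apply abs_lt_inv in Q3.
    repeat split; auto; try lra; apply abs_lt; lra. }
  specialize (IH P ((y1, eta) :: Q) x1 ltac:(simpl; lia) P5 HQ').
  cbn [rsum] in *.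
  replace (vadd (vscal (y1 - a) (f eta)) (rsum f y1 Q)) with
    (vadd (vscal (x1 - a) (f eta)) (vadd (vscal (y1 - x1) (f eta)) (rsum f y1 Q))).
  2:{ rewrite vadd_assoc, <- vscal_distr_r. f_equal. f_equal. ring. }
  rewrite vsub_add. eapply Rle_trans. apply sn_triangle.
  rewrite <- vscal_sub, sn_homog, Rabs_pos_eq by lra.
  assert (sn i (vsub (f xi) (f eta)) <= eps).
  { apply Hf; auto. apply abs_lt_inv in P2. apply abs_lt_inv in Q2. apply abs_lt. lra. }
  pose proof (loose_le _ _ _ _ _ _ P5).
  assert ((x1 - a) * sn i (vsub (f xi) (f eta)) <= (x1 - a) * eps) by (apply Rmult_le_compat_l; lra).
  lra.
Qed.

Lemma merge f i eps d lo hi b :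
  (forall s r, lo <= s <= hi -> lo <= r <= hi -> Rabs (s - r) < 2 * d -> sn i (vsub (f s) (f r)) <= eps) ->
  0 <= eps ->
  forall N P Q a, (length P + length Q <= N)%nat -> loose d lo hi a b P -> loose d lo hi a b Q ->
        sn i (vsub (rsum f a P) (rsum f a Q)) <= eps * (b - a).
Proof.
  intros Hf Heps N. induction N as [|N IH]; intros P Q a Hlen HP HQ.
  - destruct P; [|simpl in Hlen; lia]. destruct Q; [|simpl in Hlen; lia].
    simpl in *. subst. rewrite vsub_diag, sn_zero. lra.
  - destruct P as [|[x1 xi] P].
    + simpl in HP. subst. rewrite (loose_point f d lo hi b Q HQ). simpl. rewrite vsub_diag, sn_zero. lra.
    + destruct Q as [|[y1 eta] Q].
      * simpl in HQ. subst. rewrite (loose_point f d lo hi b _ HP). simpl. rewrite vsub_diag, sn_zero. lra.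
      * simpl in Hlen. destruct (Rle_dec x1 y1) as [Hxy|Hxy].
        -- apply (merge_step f i eps d lo hi b N IH Hf a x1 xi P y1 eta Q); auto. lia.
        -- rewrite sn_sub_sym.
           apply (merge_step f i eps d lo hi b N IH Hf a y1 eta Q x1 xi P); auto. lia. lra.
Qed.

Definition unif_cont (i : idx E) f a b := forall eps, 0 < eps -> exists d, 0 < d /\
  forall s r, a <= s <= b -> a <= r <= b -> Rabs (s - r) < d -> sn i (vsub (f s) (f r)) <= eps.

Lemma integral_exists f a b : a <= b -> (forall i, unif_cont i f a b) -> exists y, is_integral f a b y.
Proof.
  intros Hab UC.
  set (u := fun N => rsum f a (gen a ((b - a) / INR (S N)) (S N))).
  assert (Htp : forall N, tagged_part a b (gen a ((b - a) / INR (S N)) (S N))).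
  { intros N. replace b with (a + INR (S N) * ((b - a) / INR (S N))) at 1.
    + apply gen_tp. unfold Rdiv. apply Rmult_le_pos. lra. apply Rlt_le, Rinv_0_lt_compat, lt_0_INR; lia.
    + field. apply not_0_INR; lia. }
  assert (Hmesh : forall d, 0 < d -> exists N, forall m, (N <= m)%nat -> fine d a (gen a ((b - a) / INR (S m)) (S m))).
  { intros d Hd. destruct (arch_div a b d Hab Hd) as [N HN]. exists N. intros m Hm.
    apply gen_fine. eapply Rle_lt_trans; [|exact HN]. unfold Rdiv. apply Rmult_le_compat_l. lra.
    apply Rinv_le_contravar. apply lt_0_INR; lia. apply le_INR; lia. }
  assert (Key : forall i eps, 0 < eps -> exists d, 0 < d /\ forall l1 l2, tagged_part a b l1 -> fine d a l1 ->
     tagged_part a b l2 -> fine d a l2 -> sn i (vsub (rsum f a l1) (rsum f a l2)) < eps).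
  { intros i eps Heps. destruct (UC i (eps / (b - a + 1))) as [d0 [Hd0 H0]].
    apply Rdiv_lt_0_compat; lra.
    exists (d0 / 2). split. lra. intros l1 l2 T1 F1 T2 F2.
    assert (B := merge f i (eps / (b - a + 1)) (d0 / 2) a b b).
    assert (Hpos : 0 < eps / (b - a + 1)) by (apply Rdiv_lt_0_compat; lra).
    specialize (B ltac:(intros s r Hs Hr Hsr; apply H0; auto; lra) ltac:(lra)
       (length l1 + length l2)%nat l1 l2 a (Nat.le_refl _)
       ltac:(apply tp_loose; auto; lra) ltac:(apply tp_loose; auto; lra)).
    eapply Rle_lt_trans. exact B.
    replace (eps / (b - a + 1) * (b - a)) with (eps * ((b - a) / (b - a + 1))) by (field; lra).
    assert ((b - a) / (b - a + 1) < 1) by (apply (Rmult_lt_reg_r (b - a + 1)); [lra|]; field_simplify; lra). nra. }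
  destruct (seq_complete E u) as [L HL].
  { intros i eps Heps. destruct (Key i eps Heps) as [d [Hd K]]. destruct (Hmesh d Hd) as [N HN].
    exists N. intros m k Hm Hk. apply K; auto. }
  exists L. intros i eps Heps. destruct (Key i (eps / 2) ltac:(lra)) as [d [Hd K]].
  exists d. split; auto. intros l Hl Hf.
  destruct (Hmesh d Hd) as [N1 HN1]. destruct (HL i (eps / 2) ltac:(lra)) as [N2 HN2].
  specialize (HN1 (max N1 N2) ltac:(lia)). specialize (HN2 (max N1 N2) ltac:(lia)).
  specialize (K l _ Hl Hf (Htp _) HN1).
  fold (vsub (u (max N1 N2)) L) in HN2.
  eapply Rle_lt_trans. apply (sn_sub_tri E i _ (u (max N1 N2))). unfold u in *. lra.
Qed.

Lemma app_zero (A : Op E) : linear_op A -> app A vzero = vzero.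
Proof.
  intros [H0 [Hadd _]]. destruct (Hadd vzero vzero H0 H0) as [_ H].
  rewrite vadd_zero in H. symmetry. apply (vadd_cancel_l E (app A vzero)).
  rewrite vadd_zero. exact H.
Qed.

Lemma lin_sub (A : Op E) x y : linear_op A -> dom A x -> dom A y ->
  dom A (vsub x y) /\ app A (vsub x y) = vsub (app A x) (app A y).
Proof.
  intros HA Hx Hy. destruct HA as [H0 [Hadd Hsc]].
  destruct (Hsc (- (1)) y Hy) as [D1 E1]. rewrite vscal_m1 in D1, E1.
  destruct (Hadd x (vopp y) Hx D1) as [D2 E2]. unfold vsub. rewrite E2, E1, vscal_m1. auto.
Qed.

Lemma rsum_dom (A : Op E) f a b l : linear_op A -> tagged_part a b l ->
  (forall s, a <= s <= b -> dom A (f s)) ->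
  dom A (rsum f a l) /\ app A (rsum f a l) = rsum (fun s => app A (f s)) a l.
Proof.
  intros HA. pose proof (app_zero A HA) as HA0. destruct HA as [H0 [Hadd Hsc]].
  revert a. induction l as [|[x xi] l IH]; simpl; intros a Hl Hd.
  - auto.
  - destruct Hl as [H1 H2]. pose proof (tp_le _ _ _ H2).
    destruct (IH x H2) as [D1 E1]. { intros; apply Hd; lra. }
    destruct (Hsc (x - a) (f xi)) as [D2 E2]. { apply Hd; lra. }
    destruct (Hadd _ _ D2 D1) as [D3 E3]. split; auto. rewrite E3, E2, E1. auto.
Qed.

Lemma closed_integral (A : Op E) f a b y z : closed_op A -> a <= b ->
  (forall s, a <= s <= b -> dom A (f s)) -> is_integral f a b y ->
  is_integral (fun s => app A (f s)) a b z -> dom A y /\ app A y = z.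
Proof.
  intros [HA Hcl] Hab Hd H1 H2. apply Hcl. intros F eps Heps.
  destruct (common_delta E (fun i d => forall l, tagged_part a b l -> fine d a l ->
     sn i (vsub (rsum f a l) y) < eps /\ sn i (vsub (rsum (fun s => app A (f s)) a l) z) < eps)) with (F := F)
    as [d [Hdd HF]].
  { intros i. destruct (H1 i eps Heps) as [d1 [Hd1 P1]]. destruct (H2 i eps Heps) as [d2 [Hd2 P2]].
    exists (Rmin d1 d2). split. apply Rmin_glb_lt; auto. intros d' Hd' Hle l Hl Hf. split.
    - apply P1; auto. eapply fine_mono; eauto. eapply Rle_trans; eauto. apply Rmin_l.
    - apply P2; auto. eapply fine_mono; eauto. eapply Rle_trans; eauto. apply Rmin_r. }
  destruct (fine_exists a b d Hab Hdd) as [l [Hl Hf]].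
  destruct (rsum_dom A f a b l HA Hl Hd) as [D1 E1].
  exists (rsum f a l). split; auto. intros i Hi. destruct (HF i Hi l Hl Hf) as [Q1 Q2].
  rewrite E1, sn_sub_sym, (sn_sub_sym _ i z). auto.
Qed.

Lemma heine i f a b : a <= b ->
  (forall t, a <= t <= b -> forall eps, 0 < eps -> exists d, 0 < d /\
      forall s, a <= s <= b -> Rabs (s - t) < d -> sn i (vsub (f s) (f t)) < eps) ->
  unif_cont i f a b.
Proof.
  intros Hab Hc eps Heps.
  set (Pr := fun x => exists d, 0 < d /\ forall s r, a <= s <= x -> a <= r <= x -> Rabs (s - r) < d ->
         sn i (vsub (f s) (f r)) <= eps).
  set (St := fun x => a <= x <= b /\ Pr x).
  assert (Sa : St a).
  { split. lra. exists 1. split. lra. intros s r Hs Hr _. assert (s = r) by lra. subst.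
    rewrite vsub_diag, sn_zero. lra. }
  destruct (completeness St) as [c [Hub Hlub]].
  { exists b. intros x [Hx _]. lra. }
  { exists a. auto. }
  assert (Hac : a <= c) by (apply Hub; auto).
  assert (Hcb : c <= b) by (apply Hlub; intros x [Hx _]; lra).
  destruct (Hc c ltac:(lra) (eps / 2) ltac:(lra)) as [dc [Hdc Pc]].
  assert (Hx0 : exists x0, St x0 /\ c - dc / 2 < x0).
  { apply NNPP. intros Hn. assert (c <= c - dc / 2). { apply Hlub. intros x Hx.
      apply Rnot_lt_le. intros Hlt. apply Hn. exists x; auto. } lra. }
  destruct Hx0 as [x0 [[Hx0a [d0 [Hd0 P0]]] Hx0c]].
  assert (Hx0le : x0 <= c) by (apply Hub; split; auto; exists d0; auto).
  set (x' := Rmin b (c + dc / 2)).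
  assert (Hx'b : x' <= b) by apply Rmin_l.
  assert (Hx'c : x' <= c + dc / 2) by apply Rmin_r.
  assert (Hx'a : c <= x'). { unfold x'. apply Rmin_glb; lra. }
  assert (Px' : Pr x').
  { exists (Rmin d0 (dc / 2)). split. apply Rmin_glb_lt; lra.
    intros s r Hs Hr Hsr. pose proof (Rmin_l d0 (dc / 2)). pose proof (Rmin_r d0 (dc / 2)).
    destruct (Rle_dec s x0) as [Hs0|Hs0]; destruct (Rle_dec r x0) as [Hr0|Hr0].
    - apply P0; try lra; apply abs_lt_inv in Hsr; apply abs_lt; lra.
    - apply abs_lt_inv in Hsr.
      assert (sn i (vsub (f s) (f c)) < eps / 2) by (apply Pc; try lra; apply abs_lt; lra).
      assert (sn i (vsub (f r) (f c)) < eps / 2) by (apply Pc; try lra; apply abs_lt; lra).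
      pose proof (sn_sub_tri E i (f s) (f c) (f r)). rewrite (sn_sub_sym _ i (f c)) in H3. lra.
    - apply abs_lt_inv in Hsr.
      assert (sn i (vsub (f s) (f c)) < eps / 2) by (apply Pc; try lra; apply abs_lt; lra).
      assert (sn i (vsub (f r) (f c)) < eps / 2) by (apply Pc; try lra; apply abs_lt; lra).
      pose proof (sn_sub_tri E i (f s) (f c) (f r)). rewrite (sn_sub_sym _ i (f c)) in H3. lra.
    - apply abs_lt_inv in Hsr.
      assert (sn i (vsub (f s) (f c)) < eps / 2) by (apply Pc; try lra; apply abs_lt; lra).
      assert (sn i (vsub (f r) (f c)) < eps / 2) by (apply Pc; try lra; apply abs_lt; lra).
      pose proof (sn_sub_tri E i (f s) (f c) (f r)). rewrite (sn_sub_sym _ i (f c)) in H3. lra. }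
  assert (Hx'le : x' <= c) by (apply Hub; split; auto; lra).
  assert (x' = b).
  { unfold x' in *. destruct (Rle_dec b (c + dc / 2)).
    - rewrite Rmin_left; auto.
    - rewrite Rmin_right in Hx'le by lra. lra. }
  destruct Px' as [d [Hd Pd]]. exists d. split; auto. intros s r Hs Hr Hsr. apply Pd; auto; lra.
Qed.

Lemma unif_bounded i f a b : a <= b -> unif_cont i f a b -> exists M, forall s, a <= s <= b -> sn i (f s) <= M.
Proof.
  intros Hab UC. destruct (UC 1 ltac:(lra)) as [d [Hd P]].
  assert (Hk : forall k, forall s, a <= s <= b -> s <= a + INR k * (d / 2) -> sn i (f s) <= sn i (f a) + INR k).
  { induction k as [|k IH]; intros s Hs Hsk.
    - simpl in Hsk. assert (s = a) by lra. subst. simpl. lra.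
    - rewrite S_INR in *. destruct (Rle_dec s (a + INR k * (d / 2))) as [Hle|Hle].
      + specialize (IH s Hs Hle). lra.
      + set (r := Rmax a (s - d / 2)).
        assert (a <= r) by apply Rmax_l. assert (s - d / 2 <= r) by apply Rmax_r.
        assert (r <= s). { unfold r. apply Rmax_lub; lra. }
        assert (r <= a + INR k * (d / 2)). { unfold r. apply Rmax_lub. pose proof (pos_INR k). nra. lra. }
        specialize (IH r ltac:(lra) H2).
        assert (sn i (vsub (f s) (f r)) <= 1) by (apply P; try lra; apply abs_lt; lra).
        pose proof (sn_rev_tri E i (f s) (f r)). lra. }
  destruct (INR_archimed (d / 2) (b - a) ltac:(lra)) as [k Hk'].
  exists (sn i (f a) + INR k). intros s Hs. apply Hk; auto. lra.
Qed.

End Exist.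


Section Dom.
Variable E : LCS.
Variable A : Op E.
Hypothesis HA : linear_op A.

Lemma domPow_mono m x : domPow A m x -> forall k, (k <= m)%nat -> domPow A k x.
Proof.
  revert x. induction m as [|m IH]; intros x H k Hk.
  - assert (k = O) by lia. subst. exact I.
  - destruct k as [|k]. exact I. simpl in *. destruct H. split; auto. apply IH; auto. lia.
Qed.

Lemma domPow_add m x y : domPow A m x -> domPow A m y -> domPow A m (vadd x y).
Proof.
  revert x y. induction m as [|m IH]; intros x y Hx Hy; simpl in *; auto.
  destruct Hx, Hy. destruct HA as [_ [Hadd _]]. destruct (Hadd x y) as [D Eq]; auto.
  split; auto. rewrite Eq. auto.
Qed.

Lemma domPow_scal m c x : domPow A m x -> domPow A m (vscal c x).
Proof.
  revert x. induction m as [|m IH]; intros x Hx; simpl in *; auto.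
  destruct Hx. destruct HA as [_ [_ Hsc]]. destruct (Hsc c x) as [D Eq]; auto.
  split; auto. rewrite Eq. auto.
Qed.

Lemma domPow_sub m x y : domPow A m x -> domPow A m y -> domPow A m (vsub x y).
Proof.
  intros Hx Hy. unfold vsub. apply domPow_add; auto. rewrite <- vscal_m1. apply domPow_scal; auto.
Qed.

End Dom.

Lemma tau_T (tau : option R) : tau_pos tau -> exists T0, 0 < T0 /\ T0 <= 1 /\
  forall s, 0 <= s <= T0 -> in_I tau s.
Proof.
  destruct tau as [T|]; simpl; intros H.
  - exists (Rmin 1 (T / 2)). split. apply Rmin_glb_lt; lra. split. apply Rmin_l.
    intros s Hs. pose proof (Rmin_r 1 (T / 2)). split; lra.
  - exists 1. split. lra. split. lra. intros s Hs. split; auto; lra.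
Qed.

Lemma pow_le_1 s k : 0 <= s <= 1 -> s ^ k <= 1.
Proof. intros Hs. induction k; simpl. lra. nra. Qed.

Lemma tn_fact_le n s : 0 <= s -> 0 <= tn_fact n s <= s ^ n.
Proof.
  intros Hs. unfold tn_fact. pose proof (fact_pos n). assert (0 <= s ^ n) by (apply pow_le; lra).
  split. unfold Rdiv. apply Rmult_le_pos. lra. apply Rlt_le, Rinv_0_lt_compat. lra.
  apply (Rmult_le_reg_r (INR (Factorial.fact n))). lra. field_simplify; [|lra]. nra.
Qed.

Section PartII.
Variable E : LCS.
Variable A : Op E.
Variable tau : option R.
Variable n : nat.
Variable S : R -> E -> E.
Hypothesis HAc : closed_op A.
Hypothesis Htau : tau_pos tau.
Hypothesis HS : generates_int_semigroup A tau n S.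

Let HA : linear_op A := proj1 HAc.

Lemma S_pres t : in_I tau t -> forall m z, domPow A m z -> domPow A m (S t z).
Proof.
  intros Ht m. destruct HS as [_ [_ [_ [Hc _]]]].
  induction m as [|m IH]; intros z Hz; simpl in *; auto.
  destruct Hz as [D1 D2]. destruct (Hc t Ht z D1) as [D3 E3]. split; auto. rewrite E3. auto.
Qed.

Lemma S_zero z : S 0 z = vscal (tn_fact n 0) z.
Proof.
  destruct HS as [_ [_ [_ [_ [Hie _]]]]].
  assert (H0 : in_I tau 0). { destruct tau; simpl in *; split; lra. }
  destruct (Hie 0 z H0) as [y [Hy [Dy Ey]]].
  assert (y = vzero) by (apply (integral_unique E (fun s => S s z) 0 0 y vzero); [lra | exact Hy | apply integral_point]).
  subst. rewrite app_zero in Ey; auto. apply vsub_eq0. auto.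
Qed.

Lemma S_gen z t : dom A z -> in_I tau t ->
  is_integral (fun s => S s (app A z)) 0 t (vsub (S t z) (vscal (tn_fact n t) z)).
Proof.
  intros Hz Ht. destruct HS as [_ [_ [_ [_ [_ Hg]]]]]. apply (proj1 (Hg z (app A z))); auto.
Qed.

Section Est.
Variable i : idx E.
Variable T0 : R.
Hypothesis HT0 : 0 < T0 /\ T0 <= 1 /\ forall s, 0 <= s <= T0 -> in_I tau s.

Lemma S_cont0 z : forall eps, 0 < eps -> exists d, 0 < d /\ d <= T0 /\
  forall s, 0 <= s <= d -> sn i (vsub (S s z) (S 0 z)) < eps.
Proof.
  intros eps Heps. destruct HS as [_ [Hc _]]. destruct HT0 as [T1 [T2 T3]].
  destruct (Hc z 0 (T3 0 ltac:(lra)) i eps Heps) as [d [Hd P]].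
  exists (Rmin (d / 2) T0). split. apply Rmin_glb_lt; lra. split. apply Rmin_r.
  intros s Hs. pose proof (Rmin_l (d / 2) T0). pose proof (Rmin_r (d / 2) T0).
  apply P. apply T3; lra. apply abs_lt; lra.
Qed.

Lemma est_lt j : (j < n)%nat -> forall z, domPow A j z -> forall eps, 0 < eps ->
  exists d, 0 < d /\ d <= T0 /\ forall s, 0 <= s <= d -> sn i (S s z) <= eps * s ^ j.
Proof.
  destruct HT0 as [T1 [T2 T3]].
  induction j as [|j IH]; intros Hj z Hz eps Heps.
  - destruct (S_cont0 z eps Heps) as [d [Hd [HdT P]]]. exists d. split; auto. split; auto.
    intros s Hs. specialize (P s Hs). rewrite S_zero in P.
    unfold tn_fact in P. rewrite pow_i in P by lia. unfold Rdiv in P. rewrite Rmult_0_l, vscal_zero_l, vsub_zero_r in P.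
    simpl. lra.
  - simpl in Hz. destruct Hz as [Dz Hz].
    destruct (IH ltac:(lia) (app A z) Hz (eps / 2) ltac:(lra)) as [d1 [Hd1 [Hd1T P1]]].
    set (d := Rmin d1 (eps / (2 * (sn i z + 1)))).
    assert (Hsz : 0 <= sn i z) by apply sn_nonneg.
    assert (Hd : 0 < d). { apply Rmin_glb_lt; auto. apply Rdiv_lt_0_compat; lra. }
    exists d. split; auto. split. { eapply Rle_trans. apply Rmin_l. auto. }
    intros s Hs. pose proof (Rmin_l d1 (eps / (2 * (sn i z + 1)))). pose proof (Rmin_r d1 (eps / (2 * (sn i z + 1)))).
    fold d in H, H0.
    assert (Hin : in_I tau s) by (apply T3; lra).
    pose proof (S_gen z s Dz Hin) as G.
    assert (B : sn i (vsub (S s z) (vscal (tn_fact n s) z)) <= eps / 2 * s ^ j * (s - 0)).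
    { apply (integral_bound E i (fun r => S r (app A z)) 0 s); [lra| |exact G].
      intros r Hr; eapply Rle_trans; [apply P1; lra|].
      apply Rmult_le_compat_l; [lra|apply pow_incr; lra]. }
    pose proof (sn_rev_tri E i (S s z) (vscal (tn_fact n s) z)) as Tr.
    rewrite sn_homog in Tr. destruct (tn_fact_le n s ltac:(lra)) as [C1 C2].
    rewrite Rabs_pos_eq in Tr by lra.
    assert (Hpow : s ^ n <= s ^ (Datatypes.S j) * s).
    { replace n with (Datatypes.S j + (n - Datatypes.S j))%nat by lia. rewrite pow_add.
      apply Rmult_le_compat_l. apply pow_le; lra.
      destruct (n - Datatypes.S j)%nat as [|k] eqn:Hk. lia. simpl.
      pose proof (pow_le_1 s k ltac:(lra)). assert (0 <= s ^ k) by (apply pow_le; lra). nra. }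
    assert (Hs_sz : s * sn i z <= eps / 2).
    { assert (s * (2 * (sn i z + 1)) <= eps).
      { assert (s <= eps / (2 * (sn i z + 1))) by lra.
        apply (Rmult_le_compat_r (2 * (sn i z + 1))) in H1; [|lra].
        replace (eps / (2 * (sn i z + 1)) * (2 * (sn i z + 1))) with eps in H1 by (field; lra). lra. }
      nra. }
    assert (0 <= s ^ Datatypes.S j) by (apply pow_le; lra).
    assert (tn_fact n s * sn i z <= s ^ Datatypes.S j * (eps / 2)).
    { apply Rle_trans with (s ^ n * sn i z). apply Rmult_le_compat_r; lra.
      apply Rle_trans with (s ^ Datatypes.S j * s * sn i z). apply Rmult_le_compat_r; lra.
      rewrite Rmult_assoc. apply Rmult_le_compat_l; lra. }
    simpl in *. nra.
Qed.

Lemma est_n x : domPow A n x -> forall eps, 0 < eps ->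
  exists d, 0 < d /\ d <= T0 /\ forall s, 0 <= s <= d ->
    sn i (vsub (S s x) (vscal (tn_fact n s) x)) <= eps * s ^ n.
Proof.
  destruct HT0 as [T1 [T2 T3]]. intros Hx eps Heps.
  destruct (Nat.eq_dec n 0) as [Hn|Hn].
  - destruct (S_cont0 x eps Heps) as [d [Hd [HdT P]]]. exists d. split; auto. split; auto.
    intros s Hs. specialize (P s Hs). rewrite S_zero in P. rewrite Hn in *. unfold tn_fact in *. simpl in *.
    lra.
  - set (j := Nat.pred n). assert (Hnj : n = Datatypes.S j) by (unfold j; lia).
    assert (Hx' : domPow A (Datatypes.S j) x) by (rewrite <- Hnj; auto).
    simpl in Hx'. destruct Hx' as [Dx Hx'].
    destruct (est_lt j ltac:(lia) (app A x) Hx' eps Heps) as [d [Hd [HdT P]]].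
    exists d. split; auto. split; auto. intros s Hs.
    assert (Hin : in_I tau s) by (apply T3; lra).
    pose proof (S_gen x s Dx Hin) as G.
    assert (B : sn i (vsub (S s x) (vscal (tn_fact n s) x)) <= eps * s ^ j * (s - 0)).
    { apply (integral_bound E i (fun r => S r (app A x)) 0 s); [lra| |exact G].
      intros r Hr; eapply Rle_trans; [apply P; lra|].
      apply Rmult_le_compat_l; [lra|apply pow_incr; lra]. }
    rewrite Hnj in B |- *. simpl. lra.
Qed.

End Est.

Theorem part2 : stat_dense_le A n.
Proof.
  exists n. split. lia. intros m Hm x Hx F eps Heps.
  destruct (tau_T tau Htau) as [T0 HT0].
  assert (Hxn : domPow A n x) by (eapply domPow_mono; eauto).
  set (K := INR (Factorial.fact (Datatypes.S n))).
  assert (HK : 1 <= K) by apply fact_pos.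
  set (eps' := eps / (2 * K)).
  assert (He' : 0 < eps') by (apply Rdiv_lt_0_compat; lra).
  destruct (common_delta E (fun i d => forall s, 0 <= s <= Rmin d T0 ->
     sn i (vsub (S s x) (vscal (tn_fact n s) x)) <= eps' * s ^ n)) with (F := F) as [d [Hd HF]].
  { intros i. destruct (est_n i T0 HT0 x Hxn eps' He') as [d [Hd [HdT P]]].
    exists d. split; auto. intros d' Hd' Hle s Hs. apply P. pose proof (Rmin_l d' T0). lra. }
  destruct HT0 as [T1 [T2 T3]].
  set (t := Rmin d T0).
  assert (Ht : 0 < t) by (apply Rmin_glb_lt; auto).
  assert (HtT : t <= T0) by apply Rmin_r. assert (Htd : t <= d) by apply Rmin_l.
  assert (Hin : in_I tau t) by (apply T3; lra).
  destruct HS as [_ [_ [_ [_ [Hie _]]]]].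
  destruct (Hie t x Hin) as [y [Hy [Dy Ey]]].
  set (c := tn_fact (Datatypes.S n) t).
  assert (Hc : 0 < c).
  { unfold c, tn_fact. apply Rdiv_lt_0_compat. apply pow_lt; auto. pose proof (fact_pos (Datatypes.S n)); lra. }
  exists (vscal (/ c) y). split.
  { apply domPow_scal; auto. simpl. split; auto. rewrite Ey.
    apply domPow_sub; auto. apply S_pres; auto. apply domPow_scal; auto. }
  intros i Hi.
  assert (HI := integral_sub E _ _ 0 t _ _ Hy (integral_poly E x n t ltac:(lra))).
  fold c in HI.
  assert (B : sn i (vsub y (vscal c x)) <= eps' * t ^ n * (t - 0)).
  { apply (integral_bound E i (fun s => vsub (S s x) (vscal (tn_fact n s) x)) 0 t); [lra| |exact HI].
    intros r Hr; eapply Rle_trans; [apply (HF i Hi r); unfold t in Hr; lra|].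
    apply Rmult_le_compat_l; [lra|apply pow_incr; lra]. }
  replace (vsub x (vscal (/ c) y)) with (vscal (- / c) (vsub y (vscal c x))).
  2:{ rewrite vscal_sub, vscal_assoc.
      replace (- / c * c) with (- (1)) by (field; lra). rewrite vscal_m1, vscal_opp_l.
      unfold vsub. rewrite vopp_vopp. apply vadd_comm. }
  rewrite sn_homog, Rabs_Ropp, Rabs_pos_eq by (apply Rlt_le, Rinv_0_lt_compat; auto).
  assert (HK0 : K <> 0) by (intro; lra).
  assert (Ht0 : t <> 0) by (intro; lra).
  assert (Htn : t ^ n <> 0) by (apply pow_nonzero; auto).
  assert (c = t ^ n * t / K).
  { unfold c, tn_fact. fold K. change (t ^ Datatypes.S n) with (t * t ^ n). field. auto. }
  assert (/ c * (eps' * t ^ n * (t - 0)) = eps / 2).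
  { rewrite H. unfold eps'. field. auto. }
  assert (/ c * sn i (vsub y (vscal c x)) <= / c * (eps' * t ^ n * (t - 0))).
  { apply Rmult_le_compat_l; auto. apply Rlt_le, Rinv_0_lt_compat; auto. }
  lra.
Qed.

End PartII.


Section Concat.
Variable E : LCS.
Implicit Types f : R -> E.

Lemma tp_app a s r l g : tagged_part a s l -> tagged_part s r g -> tagged_part a r (l ++ g).
Proof.
  revert a. induction l as [|[x xi] l IH]; simpl; intros a H1 H2.
  - subst; auto.
  - destruct H1; split; auto.
Qed.

Lemma fine_app d a s l g : tagged_part a s l -> fine d a l -> fine d s g -> fine d a (l ++ g).
Proof.
  revert a. induction l as [|[x xi] l IH]; simpl; intros a H1 F1 F2.
  - subst; auto.
  - destruct H1, F1; split; auto.
Qed.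

Lemma rsum_app f a s l g : tagged_part a s l -> rsum f a (l ++ g) = vadd (rsum f a l) (rsum f s g).
Proof.
  revert a. induction l as [|[x xi] l IH]; simpl; intros a H1.
  - subst. rewrite vadd_zero_l; auto.
  - destruct H1. rewrite IH by auto. apply vadd_assoc.
Qed.

Lemma int_lip i f a s r ys yr M : a <= s <= r -> is_integral f a s ys -> is_integral f a r yr ->
  (forall q, a <= q <= r -> sn i (f q) <= M) -> sn i (vsub yr ys) <= M * (r - s).
Proof.
  intros Hsr Hs Hr Hf. apply le_eps_R. intros eps Heps.
  destruct (Hs i (eps / 2) ltac:(lra)) as [d1 [Hd1 P1]].
  destruct (Hr i (eps / 2) ltac:(lra)) as [d2 [Hd2 P2]].
  set (d := Rmin d1 d2). assert (Hd : 0 < d) by (apply Rmin_glb_lt; auto).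
  destruct (fine_exists a s d ltac:(lra) Hd) as [l [Hl Fl]].
  destruct (fine_exists s r d ltac:(lra) Hd) as [g [Hg Fg]].
  specialize (P1 l Hl (fine_mono _ _ _ _ Fl (Rmin_l _ _))).
  specialize (P2 (l ++ g) (tp_app _ _ _ _ _ Hl Hg) (fine_mono _ _ _ _ (fine_app _ _ _ _ _ Hl Fl Fg) (Rmin_r _ _))).
  rewrite (rsum_app f a s l g Hl) in P2.
  assert (Bg : sn i (rsum f s g) <= M * (r - s)).
  { apply (rsum_bound E i f s r g M Hg). intros q Hq; apply Hf; lra. }
  rewrite <- (vsub_chain E yr (vadd (rsum f a l) (rsum f s g)) ys).
  assert (H3 : vsub (vadd (rsum f a l) (rsum f s g)) ys = vadd (vsub (rsum f a l) ys) (rsum f s g)).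
  { unfold vsub. rewrite <- !vadd_assoc. f_equal. apply vadd_comm. }
  rewrite H3. eapply Rle_lt_trans. apply sn_triangle.
  rewrite sn_sub_sym in P2.
  pose proof (sn_triangle E i (vsub (rsum f a l) ys) (rsum f s g)). lra.
Qed.

End Concat.


Section PartI.
Variable E : LCS.
Variable A : Op E.
Variable tau : option R.
Variable x : E.
Variable u : R -> E.
Variable T0 : R.
Hypothesis HAc : closed_op A.
Hypothesis HT0 : 0 < T0 /\ T0 <= 1 /\ forall s, 0 <= s <= T0 -> in_I tau s.
Hypothesis Hu : mild_solution A tau x u.

Let HA : linear_op A := proj1 HAc.

Fixpoint V (k : nat) (t : R) : E :=
  match k with
  | O => u t
  | S k' => epsilon (inhabits vzero) (fun y => is_integral (V k') 0 t y)
  end.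

Lemma unif_restrict i f a b c : unif_cont E i f a b -> a <= c <= b -> unif_cont E i f a c.
Proof.
  intros H Hc eps Heps. destruct (H eps Heps) as [d [Hd P]]. exists d. split; auto.
  intros s r Hs Hr Hsr. apply P; auto; lra.
Qed.

Lemma V_uc : forall k, (forall i, unif_cont E i (V k) 0 T0) /\
  (forall t, 0 <= t <= T0 -> is_integral (V k) 0 t (V (S k) t)).
Proof.
  destruct HT0 as [T1 [T2 T3]].
  assert (Hint : forall k, (forall i, unif_cont E i (V k) 0 T0) ->
     forall t, 0 <= t <= T0 -> is_integral (V k) 0 t (V (S k) t)).
  { intros k Hk t Ht. simpl. apply epsilon_spec.
    apply integral_exists. lra. intros i. eapply unif_restrict; eauto. }
  induction k as [|k IH].
  - assert (H0 : forall i, unif_cont E i (V 0) 0 T0).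
    { intros i. apply heine. lra. intros t Ht eps Heps.
      destruct Hu as [Hc _]. destruct (Hc t (T3 t Ht) i eps Heps) as [d [Hd P]].
      exists d. split; [exact Hd|]. intros s Hs Hst. apply P; auto. }
    split; auto.
  - destruct IH as [UC INT].
    assert (H1 : forall i, unif_cont E i (V (S k)) 0 T0).
    { intros i. destruct (unif_bounded E i (V k) 0 T0 ltac:(lra) (UC i)) as [M HM].
      assert (HM0 : 0 <= M) by (eapply Rle_trans; [apply sn_nonneg| apply (HM 0); lra]).
      intros eps Heps. exists (eps / (M + 1)). split. apply Rdiv_lt_0_compat; lra.
      intros s r Hs Hr Hsr.
      assert (Hgen : forall s r, 0 <= s <= T0 -> 0 <= r <= T0 -> s <= r -> r - s < eps / (M + 1) ->
                sn i (vsub (V (S k) r) (V (S k) s)) <= eps).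
      { clear s r Hs Hr Hsr. intros s r Hs Hr Hle Hlt.
        eapply Rle_trans. apply (int_lip E i (V k) 0 s r); auto; try lra.
        intros q Hq; apply HM; lra.
        apply Rle_trans with (M * (eps / (M + 1))). apply Rmult_le_compat_l; lra.
        apply (Rmult_le_reg_r (M + 1)). lra. field_simplify; lra. }
      apply abs_lt_inv in Hsr.
      destruct (Rle_dec s r).
      - rewrite sn_sub_sym. apply Hgen; auto; lra.
      - apply Hgen; auto; lra. }
    split; auto.
Qed.

Lemma u0 : u 0 = x.
Proof.
  destruct HT0 as [T1 [T2 T3]]. destruct Hu as [_ Hm].
  destruct (Hm 0 (T3 0 ltac:(lra))) as [y [Hy [Dy Ey]]].
  assert (y = vzero) by (apply (integral_unique E u 0 0 y vzero); [lra | exact Hy | apply integral_point]).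
  subst. rewrite app_zero in Ey; auto. apply vsub_eq0. auto.
Qed.

Lemma V_dom : forall k t, 0 <= t <= T0 ->
  dom A (V (S k) t) /\ app A (V (S k) t) = vsub (V k t) (vscal (tn_fact k t) x).
Proof.
  destruct HT0 as [T1 [T2 T3]].
  induction k as [|k IH]; intros t Ht.
  - destruct Hu as [_ Hm]. destruct (Hm t (T3 t Ht)) as [y [Hy [Dy Ey]]].
    assert (y = V 1 t) by (apply (integral_unique E u 0 t); [lra | exact Hy | apply (proj2 (V_uc 0)); auto]).
    subst. split; auto. rewrite Ey. unfold tn_fact. simpl. replace (1 / 1) with 1 by field.
    rewrite vscal_one. auto.
  - apply (closed_integral E A (V (S k)) 0 t); auto; try lra.
    + intros s Hs. apply IH; lra.
    + apply (proj2 (V_uc (S k))); auto.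
    + apply (integral_ext E (fun s => vsub (V k s) (vscal (tn_fact k s) x))).
      * intros s Hs. symmetry. apply IH. lra.
      * apply integral_sub. apply (proj2 (V_uc k)); auto. apply integral_poly. lra.
Qed.

Lemma V_domPow m : domPow A m x -> forall j, (j <= S m)%nat -> forall k, (j <= k)%nat ->
  forall t, 0 <= t <= T0 -> domPow A j (V k t).
Proof.
  intros Hx j. induction j as [|j IH]; intros Hj k Hk t Ht.
  - exact I.
  - destruct k as [|k]. lia. destruct (V_dom k t Ht) as [D Eq]. cbn [domPow]. split; auto. rewrite Eq.
    apply domPow_sub; auto. apply IH; auto; lia. apply domPow_scal; auto.
    apply (domPow_mono E A m x Hx). lia.
Qed.

Lemma V_est i t M : 0 <= t <= T0 -> (forall s, 0 <= s <= t -> sn i (vsub (u s) x) <= M) ->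
  forall k s, 0 <= s <= t -> sn i (vsub (V k s) (vscal (tn_fact k s) x)) <= s ^ k * M.
Proof.
  intros Ht HM k. induction k as [|k IH]; intros s Hs.
  - unfold tn_fact. simpl. replace (1 / 1) with 1 by field. rewrite vscal_one. rewrite Rmult_1_l. auto.
  - assert (HI := integral_sub E _ _ 0 s _ _ (proj2 (V_uc k) s ltac:(lra)) (integral_poly E x k s ltac:(lra))).
    assert (0 <= M) by (eapply Rle_trans; [apply sn_nonneg| apply (HM 0); lra]).
    eapply Rle_trans.
    apply (integral_bound E i (fun r => vsub (V k r) (vscal (tn_fact k r) x)) 0 s _ (s ^ k * M)); [lra| |exact HI].
    + intros r Hr. eapply Rle_trans. apply IH; lra. apply Rmult_le_compat_r; auto. apply pow_incr; lra.
    + simpl. lra.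
Qed.

End PartI.

Theorem part1 (E : LCS) (A : Op E) (tau : option R) (n : nat) :
  closed_op A -> tau_pos tau ->
  (forall x : E, domPow A n x -> unique_mild A tau x) -> stat_dense_le A n.
Proof.
  intros HAc Htau Hm. exists n. split. lia. intros m Hmn x Hx F eps Heps.
  destruct (tau_T tau Htau) as [T0 HT0].
  destruct (Hm x (domPow_mono E A m x Hx n Hmn)) as [u [Hu _]].
  set (K := INR (Factorial.fact (S m))).
  assert (HK : 1 <= K) by apply fact_pos.
  set (M := eps / (2 * K)).
  assert (HM : 0 < M) by (apply Rdiv_lt_0_compat; lra).
  pose proof (u0 E A tau x u T0 HAc HT0 Hu) as U0.
  destruct HT0 as [T1 [T2 T3]].
  destruct (common_delta E (fun i d => forall s, 0 <= s <= Rmin d T0 -> sn i (vsub (u s) x) <= M)) with (F := F)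
    as [d [Hd HF]].
  { intros i. destruct Hu as [Hc _]. destruct (Hc 0 (T3 0 ltac:(lra)) i M HM) as [d [Hd P]].
    exists (d / 2). split. lra. intros d' Hd' Hle s Hs. pose proof (Rmin_l d' T0).
    rewrite <- U0. left. apply P. apply T3. pose proof (Rmin_r d' T0). lra. apply abs_lt; lra. }
  set (t := Rmin d T0).
  assert (Ht : 0 < t) by (apply Rmin_glb_lt; auto).
  assert (HtT : t <= T0) by apply Rmin_r.
  set (c := tn_fact (S m) t).
  assert (Hc : 0 < c).
  { unfold c, tn_fact. apply Rdiv_lt_0_compat. apply pow_lt; auto. pose proof (fact_pos (S m)); lra. }
  exists (vscal (/ c) (V E u (S m) t)). split.
  { apply domPow_scal. exact (proj1 HAc).
    apply (V_domPow E A tau x u T0 HAc (conj T1 (conj T2 T3)) Hu m Hx (S m)); auto; lra. }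
  intros i Hi.
  assert (B := V_est E A tau x u T0 (conj T1 (conj T2 T3)) Hu i t M ltac:(lra)
     ltac:(intros s Hs; apply HF; auto) (S m) t ltac:(lra)).
  fold c in B.
  replace (vsub x (vscal (/ c) (V E u (S m) t))) with
    (vscal (- / c) (vsub (V E u (S m) t) (vscal c x))).
  2:{ rewrite vscal_sub, vscal_assoc.
      replace (- / c * c) with (- (1)) by (field; lra). rewrite vscal_m1, vscal_opp_l.
      unfold vsub. rewrite vopp_vopp. apply vadd_comm. }
  rewrite sn_homog, Rabs_Ropp, Rabs_pos_eq by (apply Rlt_le, Rinv_0_lt_compat; auto).
  assert (HK0 : K <> 0) by (intro; lra).
  assert (Ht0 : t <> 0) by (intro; lra).
  assert (c = t ^ S m / K) by reflexivity.
  assert (/ c * (t ^ S m * M) = eps / 2).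
  { rewrite H. unfold M. field. split; auto. apply pow_nonzero; auto. }
  assert (/ c * sn i (vsub (V E u (S m) t) (vscal c x)) <= / c * (t ^ S m * M)).
  { apply Rmult_le_compat_l; auto. apply Rlt_le, Rinv_0_lt_compat; auto. }
  lra.
Qed.


Theorem proposition2p3 (E : LCS) (A : Op E) (tau : option R) (n : nat) :
  closed_op A -> tau_pos tau ->
  ((forall x : E, domPow A n x -> unique_mild A tau x) -> stat_dense_le A n) /\
  (forall S : R -> E -> E, generates_int_semigroup A tau n S -> stat_dense_le A n).
Proof.
  intros HAc Htau. split.
  - apply part1; auto.
  - intros S HS. apply (part2 E A tau n S HAc Htau HS).
Qed.
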